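(* Let $S_X,S_Y$ be finite nonempty action sets, $\lambda\in[0,1)$, and let $\varphi(s_X,s_Y)=\phi_X(s_X)+\phi_Y(s_Y)$ be additive. Let $\tau_X^+,\tau_X^-\in\Delta(S_X)$ satisfy $$\min_{s_Y}\varphi(\tau_X^+,s_Y)\ge(1-\lambda)\max_{s_Y}\varphi(\tau_X^+,s_Y)+\lambda\max_{s_Y}\varphi(\tau_X^-,s_Y),$$ $$\max_{s_Y}\varphi(\tau_X^-,s_Y)\le\lambda\min_{s_Y}\varphi(\tau_X^+,s_Y)+(1-\lambda)\min_{s_Y}\varphi(\tau_X^-,s_Y).$$ Then for every $K\in\big[\phi_X(\tau_X^-)+\max_{s_Y}\phi_Y(s_Y),\ \phi_X(\tau_X^+)+\min_{s_Y}\phi_Y(s_Y)\big]$ there exist $p_0\in[0,1]$ and $p^*:S_Y\to[0,1]$ such that the two-point reactive strategy which plays $p_0\tau_X^++(1-p_0)\tau_X^-$ in round $0$ and $\sigma_X^*[s_Y]=p^*[s_Y]\tau_X^++(1-p^*[s_Y])\tau_X^-$ in round $t+1$ after $Y$ played $s_Y$ in round $t$ enforces $\varphi\equiv K$, i.e., is $(\varphi-K,\lambda)$-autocratic.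
   Context: Two players $X,Y$ play a repeated game with finite action sets $S_X,S_Y$; $\Delta(S)$ denotes the probability distributions on $S$. Additive means $\phi_X:S_X\to\mathbb{R}$, $\phi_Y:S_Y\to\mathbb{R}$ with $\varphi(s_X,s_Y)=\phi_X(s_X)+\phi_Y(s_Y)$; $\phi_X(\tau_X)=\mathbb{E}_{s_X\sim\tau_X}[\phi_X(s_X)]$ and $\varphi(\tau_X,s_Y)=\mathbb{E}_{s_X\sim\tau_X}[\varphi(s_X,s_Y)]$; maxima/minima over $s_Y$ are over $S_Y$. Histories: $\mathcal{H}=\bigcup_{T\ge0}(S_X\times S_Y)^T$; behavioral strategies are maps $\sigma:\mathcal{H}\to\Delta(S)$; players independently draw actions each round from their strategies evaluated at the history of realized action pairs, with $\mathbb{E}_{\sigma_X,\sigma_Y}$ the expectation over the resulting play. For $f:S_X\times S_Y\to\mathbb{R}$, $\sigma_X$ is $(f,\lambda)$-autocratic if for every behavioral strategy $\sigma_Y$ of $Y$, $\mathbb{E}_{\sigma_X,\sigma_Y}[(1-\lambda)\sum_{t\ge0}\lambda^tf(s_X^t,s_Y^t)]=0$. *)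

(* Defs.v *)
From HB Require Import structures.
From mathcomp Require Import all_boot all_order all_algebra.
From mathcomp Require Import classical_sets boolp reals topology normedtype sequences.
Import numFieldNormedType.Exports.
Local Open Scope classical_set_scope.
Set Implicit Arguments. Unset Strict Implicit. Unset Printing Implicit Defensive.
Import Order.TTheory GRing.Theory Num.Theory.
Local Open Scope ring_scope.

Section Game.
Variables (R : realType) (SX SY : finType).

Definition is_dist (T : finType) (p : T -> R) : Prop :=
  (forall x, 0 <= p x) /\ \sum_(x : T) p x = 1.

Definition history := seq (SX * SY).
Definition stratX := history -> SX -> R.
Definition stratY := history -> SY -> R.

Fixpoint hprob_from (sX : stratX) (sY : stratY) (prefix rest : history) : R :=
  match rest with
  | [::] => 1
  | e :: r => sX prefix e.1 * sY prefix e.2 * hprob_from sX sY (rcons prefix e) r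
  end.

Definition hprob (sX : stratX) (sY : stratY) (h : history) : R :=
  hprob_from sX sY [::] h.

(* E[f(s_X^t, s_Y^t)] : sum over all histories of length t+1 *)
Definition stage_exp (sX : stratX) (sY : stratY) (f : SX -> SY -> R) (t : nat) : R :=
  \sum_(h : (t.+1).-tuple (SX * SY))
     hprob sX sY h * f (tnth h ord_max).1 (tnth h ord_max).2.

Definition disc_partial (sX : stratX) (sY : stratY) (f : SX -> SY -> R) (lam : R)
  (n : nat) : R :=
  \sum_(t < n) (1 - lam) * lam ^+ t * stage_exp sX sY f t.

Definition autocratic (f : SX -> SY -> R) (lam : R) (sX : stratX) : Prop :=
  forall sY : stratY, (forall h, is_dist (sY h)) ->
    disc_partial sX sY f lam @ \oo --> (0 : R).

Definition expX (phiX : SX -> R) (tau : SX -> R) : R := \sum_(x : SX) tau x * phiX x.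
Definition phi_mix (phiX : SX -> R) (phiY : SY -> R) (tau : SX -> R) (y : SY) : R :=
  \sum_(x : SX) tau x * (phiX x + phiY y).

(* max / min over S_Y (0 if S_Y were empty; S_Y is assumed nonempty) *)
Definition maxY (g : SY -> R) : R :=
  if [pick y : SY] is Some y0 then \big[Num.max/g y0]_(y : SY) g y else 0.
Definition minY (g : SY -> R) : R :=
  if [pick y : SY] is Some y0 then \big[Num.min/g y0]_(y : SY) g y else 0.

Definition mixX (p : R) (tp tm : SX -> R) : SX -> R := fun x => p * tp x + (1 - p) * tm x.

Definition reactive (p0 : R) (pstar : SY -> R) (tp tm : SX -> R) : stratX :=
  fun h => match rev h with
           | [::] => mixX p0 tp tm
           | e :: _ => mixX (pstar e.2) tp tm
           end.

End Game.

(* Main.v *)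
Require Import Defs.
From HB Require Import structures.
From mathcomp Require Import all_boot all_order all_algebra.
From mathcomp Require Import classical_sets boolp reals topology normedtype sequences.
From mathcomp Require Import ring lra.
Import numFieldNormedType.Exports.
Local Open Scope classical_set_scope.
Import Order.TTheory GRing.Theory Num.Theory.
Local Open Scope ring_scope.
Set Implicit Arguments. Unset Strict Implicit. Unset Printing Implicit Defensive.
Lemma hprob_from_rcons (R : realType) (SX SY : finType) (sX : stratX R SX SY) (sY : stratY R SX SY) pre r e :
  hprob_from sX sY pre (rcons r e) = hprob_from sX sY pre r * (sX (pre ++ r) e.1 * sY (pre ++ r) e.2).
Proof.
elim: r pre => [|a r IH] pre /=; first by rewrite cats0 mulr1 mul1r.
by rewrite IH cat_rcons !mulrA.
Qed.

Lemma big_tuple_rcons (R : realType) (T : finType) n (G : n.+1.-tuple T -> R) :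
  \sum_(h : n.+1.-tuple T) G h = \sum_(h : n.-tuple T) \sum_(e : T) G [tuple of rcons h e].
Proof.
rewrite pair_big /=.
pose f (p : n.-tuple T * T) : n.+1.-tuple T := [tuple of rcons p.1 p.2].
pose g (h : n.+1.-tuple T) : n.-tuple T * T := ([tuple of belast (thead h) (behead h)], last (thead h) (behead h)).
have E (t : n.+1.-tuple T) : rcons (belast (thead t) (behead t)) (last (thead t) (behead t)) = t.
  rewrite -lastI; case: t => [[|x s] sz] //.
rewrite (reindex f) /=; last first.
  exists g; [move=> [h e] _ | move=> h _].
    have := E (f (h, e)); rewrite /f /= => /rcons_inj [E1 E2].
    by rewrite /g; congr pair; [apply: val_inj|].
  by apply: val_inj; rewrite /= E.
by [].
Qed.

Lemma big_tuple0 (R : realType) (T : finType) (G : 0.-tuple T -> R) :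
  \sum_(h : 0.-tuple T) G h = G [tuple].
Proof. by rewrite (big_pred1 [tuple]) // => h; rewrite /= (tuple0 h); apply/esym/eqP. Qed.

Lemma sum_affine (R : realType) (I : finType) (a u : I -> R) C :
  \sum_i a i = 1 -> \sum_i a i * (u i + C) = \sum_i a i * u i + C.
Proof.
move=> Ha; under eq_bigr do rewrite mulrDr.
by rewrite big_split /= -mulr_suml Ha mul1r.
Qed.

Section Main.
Variables (R : realType) (SX SY : finType).
Variables (phiX : SX -> R) (phiY : SY -> R) (tp tm : SX -> R).
Hypotheses (htp : is_dist tp) (htm : is_dist tm).
Variables (p0 : R) (pstar : SY -> R).
Hypotheses (hp0 : 0 <= p0 <= 1) (hps : forall y, 0 <= pstar y <= 1).
Variable (sY : stratY R SX SY).
Hypothesis (hsY : forall h, is_dist (sY h)).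

Definition Pp (h : history SX SY) : R :=
  match rev h with [::] => p0 | e :: _ => pstar e.2 end.

Let sX := reactive p0 pstar tp tm.

Lemma sXE h : sX h = mixX (Pp h) tp tm.
Proof. by rewrite /sX /reactive /Pp; case: (rev h). Qed.

Lemma Pp_01 h : 0 <= Pp h <= 1.
Proof. by rewrite /Pp; case: (rev h). Qed.

Lemma sum_mix p : \sum_x mixX p tp tm x = 1.
Proof.
rewrite /mixX big_split /= -!mulr_sumr htp.2 htm.2; lra.
Qed.

Lemma sum_mix_phi p : \sum_x mixX p tp tm x * phiX x =
   p * expX phiX tp + (1 - p) * expX phiX tm.
Proof.
rewrite /mixX /expX !mulr_sumr -big_split /=; apply: eq_bigr => x _; lra.
Qed.

Lemma sX_ge0 h x : 0 <= sX h x.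
Proof.
rewrite sXE /mixX; have /andP[a b] := Pp_01 h.
by rewrite addr_ge0 // mulr_ge0 // ?htp.1 ?htm.1 // subr_ge0.
Qed.

Lemma hprob_from_ge0 pre r : 0 <= hprob_from sX sY pre r.
Proof.
elim: r pre => [|e r IH] pre /=; first by [].
by rewrite !mulr_ge0 // ?sX_ge0 ?(hsY _).1.
Qed.

Lemma step t (k : t.+1.-tuple (SX * SY) -> R) :
  \sum_(h : t.+1.-tuple (SX * SY)) hprob sX sY h * k h =
  \sum_(h : t.-tuple (SX * SY)) hprob sX sY h *
     \sum_x \sum_y sX h x * sY h y * k [tuple of rcons h (x, y)].
Proof.
rewrite big_tuple_rcons; apply: eq_bigr => h _.
rewrite pair_big /= mulr_sumr; apply: eq_bigr => [[x y]] _ /=.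
rewrite /hprob hprob_from_rcons /= !mulrA. done.
Qed.

Definition Zt t := \sum_(h : t.-tuple (SX * SY)) hprob sX sY h.
Definition qt t := \sum_(h : t.-tuple (SX * SY)) hprob sX sY h * Pp h.
Definition et t := \sum_(h : t.-tuple (SX * SY)) hprob sX sY h * \sum_y sY h y * phiY y.

Lemma inner_sum h (u : SX -> R) (v : SY -> R) C :
  \sum_x \sum_y sX h x * sY h y * (u x + v y + C) =
  \sum_x sX h x * u x + \sum_y sY h y * v y + C.
Proof.
have -> : \sum_x \sum_y sX h x * sY h y * (u x + v y + C) =
   \sum_x sX h x * (u x + (\sum_y sY h y * v y + C)).
  apply: eq_bigr => x _.
  rewrite -sum_affine; last by rewrite (hsY h).2.
  rewrite addrC -sum_affine; last by rewrite (hsY h).2.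
  rewrite mulr_sumr; apply: eq_bigr => y _; lra.
rewrite sum_affine; last by rewrite sXE sum_mix.
by rewrite addrA.
Qed.

Lemma inner1 h (g : SY -> R) :
  \sum_x \sum_y sX h x * sY h y * g y = \sum_y sY h y * g y.
Proof.
rewrite exchange_big; apply: eq_bigr => y _.
under eq_bigr do rewrite -mulrA.
by rewrite -mulr_suml sXE sum_mix mul1r.
Qed.

Lemma Zt1 t : Zt t = 1.
Proof.
elim: t => [|t IH]; first by rewrite /Zt big_tuple0.
rewrite /Zt; under eq_bigr do rewrite -[hprob _ _ _]mulr1.
rewrite step -[RHS]IH; apply: eq_bigr => h _.
rewrite inner1; under eq_bigr do rewrite mulr1.
by rewrite (hsY h).2 mulr1.
Qed.

Lemma q0 : qt 0 = p0.
Proof. by rewrite /qt big_tuple0 /hprob /= mul1r. Qed.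

Lemma q_step t : qt t.+1 = \sum_(h : t.-tuple (SX * SY)) hprob sX sY h * \sum_y sY h y * pstar y.
Proof.
rewrite /qt step; apply: eq_bigr => h _; congr (_ * _).
rewrite -inner1; apply: eq_bigr => x _; apply: eq_bigr => y _.
by rewrite /Pp /= rev_rcons.
Qed.

Lemma q_01 t : 0 <= qt t <= 1.
Proof.
apply/andP; split.
  by apply: sumr_ge0 => h _; rewrite mulr_ge0 ?hprob_from_ge0 //; case/andP: (Pp_01 h).
rewrite -(Zt1 t); apply: ler_sum => h _.
case/andP: (Pp_01 h) => _ h1.
by rewrite ler_piMr ?hprob_from_ge0.
Qed.

Lemma stage_eq t K :
  stage_exp sX sY (fun x y => phiX x + phiY y - K) t =
  (expX phiX tp - expX phiX tm) * qt t + et t + (expX phiX tm - K).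
Proof.
rewrite /stage_exp step.
have H : forall h : t.-tuple (SX * SY), \sum_x \sum_y sX h x * sY h y *
     (phiX (tnth [tuple of rcons h (x, y)] ord_max).1 +
      phiY (tnth [tuple of rcons h (x, y)] ord_max).2 - K) =
   (expX phiX tp - expX phiX tm) * Pp h + \sum_y sY h y * phiY y + (expX phiX tm - K).
  move=> h.
  have E x y : tnth [tuple of rcons h (x, y)] ord_max = (x, y).
    by rewrite (tnth_nth (x, y)) /= nth_rcons size_tuple ltnn eqxx.
  under eq_bigr do under eq_bigr do rewrite E /=.
  rewrite inner_sum sXE sum_mix_phi; lra.
under eq_bigr do rewrite H.
rewrite /qt /et.
under eq_bigr do rewrite !mulrDr.
rewrite !big_split /= -mulr_suml -/(Zt t) Zt1 mul1r mulr_sumr.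
congr (_ + _ + _); first by apply: eq_bigr => h _; lra.
by rewrite -mulr_suml -/(Zt t) Zt1 mul1r.
Qed.

Lemma q_rel (c b : R) t : (forall y, c * pstar y = b - phiY y) ->
  c * qt t.+1 = b - et t.
Proof.
move=> hc; rewrite q_step /et mulr_sumr.
have -> : b = b * Zt t by rewrite Zt1 mulr1.
rewrite /Zt mulr_sumr -sumrB; apply: eq_bigr => h _.
rewrite mulrCA [b * _]mulrC -mulrBr; congr (_ * _).
rewrite mulr_sumr.
have -> : b = b * \sum_y sY h y by rewrite (hsY h).2 mulr1.
rewrite mulr_sumr -sumrB; apply: eq_bigr => y _.
by rewrite mulrCA hc; lra.
Qed.

Lemma closed_form (lam K b : R) n :
  (forall y, lam * (expX phiX tp - expX phiX tm) * pstar y = b - phiY y) ->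
  (1 - lam) * (expX phiX tp - expX phiX tm) * p0 = (K - expX phiX tm) - b ->
  disc_partial sX sY (fun x y => phiX x + phiY y - K) lam n =
  lam ^+ n * ((K - expX phiX tm) - b - (1 - lam) * (expX phiX tp - expX phiX tm) * qt n).
Proof.
move=> hl hz; set D := expX phiX tp - expX phiX tm.
elim: n => [|n IH].
  by rewrite /disc_partial big_ord0 expr0 mul1r q0 hz subrr.
rewrite /disc_partial big_ord_recr /= -/(disc_partial _ _ _ _ n) IH stage_eq -/D.
have := q_rel n hl; rewrite exprS.
set u := lam ^+ n; set q1 := qt n.+1; set q := qt n; set e := et n => hq.
have -> : e = b - lam * D * q1 by rewrite hq; lra.
ring.
Qed.
End Main.

Lemma bigmax_ge_seq (R : realType) (T : eqType) (g : T -> R) x0 (r : seq T) y :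
  y \in r -> g y <= \big[Num.max/x0]_(i <- r) g i.
Proof.
elim: r => [|a r IH] //; rewrite in_cons big_cons => /orP[/eqP->|/IH H].
  by rewrite le_max lexx.
by rewrite le_max H orbT.
Qed.

Lemma bigmin_le_seq (R : realType) (T : eqType) (g : T -> R) x0 (r : seq T) y :
  y \in r -> \big[Num.min/x0]_(i <- r) g i <= g y.
Proof.
elim: r => [|a r IH] //; rewrite in_cons big_cons => /orP[/eqP->|/IH H].
  by rewrite ge_min lexx.
by rewrite ge_min H orbT.
Qed.

Lemma maxY_ge (R : realType) (SY : finType) (g : SY -> R) y : g y <= maxY g.
Proof.
rewrite /maxY; case: pickP => [y0 _|/(_ y) //].
by apply: bigmax_ge_seq; rewrite mem_index_enum.
Qed.

Lemma minY_le (R : realType) (SY : finType) (g : SY -> R) y : minY g <= g y.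
Proof.
rewrite /minY; case: pickP => [y0 _|/(_ y) //].
by apply: bigmin_le_seq; rewrite mem_index_enum.
Qed.

Lemma maxY_ex (R : realType) (SY : finType) (g : SY -> R) : (0 < #|SY|)%N -> exists y, maxY g = g y.
Proof.
move=> ne; rewrite /maxY; case: pickP => [y0 _|H]; last first.
  by move: ne => /card_gt0P [y _]; have := H y.
apply: (big_ind (fun v => exists y, v = g y)); first by exists y0.
  move=> a b [ya ->] [yb ->]; rewrite /Num.max.
  by case: ifP => _; [exists yb|exists ya].
by move=> y _; exists y.
Qed.

Lemma phi_mixE (R : realType) (SX SY : finType) phiX (phiY : SY -> R) (tau : SX -> R) y :
  is_dist tau -> phi_mix phiX phiY tau y = expX phiX tau + phiY y.
Proof.
move=> [_ h1]; rewrite /phi_mix /expX.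
under eq_bigr do rewrite mulrDr.
by rewrite big_split /= -mulr_suml h1 mul1r.
Qed.

Lemma frac01 (R : realType) (u v : R) : 0 <= u <= v -> 0 <= u / v <= 1 /\ v * (u / v) = u.
Proof.
case/andP=> u0 uv; have [v00|v0] := eqVneq v 0.
  rewrite v00 in uv *.
  have -> : u = 0 by apply/eqP; rewrite eq_le uv u0.
  by rewrite !mul0r lexx ler01.
have vp : 0 < v by rewrite lt_def v0 (le_trans u0 uv).
split; last by rewrite mulrC divfK.
by rewrite divr_ge0 ?(ltW vp) // ler_pdivrMr // mul1r.
Qed.

Unset Implicit Arguments.
Set Strict Implicit.
Theorem lemma3 (R : realType) (SX SY : finType)
  (neX : (0 < #|SX|)%N) (neY : (0 < #|SY|)%N)
  (lam : R) (hlam0 : 0 <= lam) (hlam1 : lam < 1)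
  (phiX : SX -> R) (phiY : SY -> R)
  (tp tm : SX -> R) (htp : is_dist tp) (htm : is_dist tm)
  (h1 : minY (phi_mix phiX phiY tp) >=
        (1 - lam) * maxY (phi_mix phiX phiY tp) + lam * maxY (phi_mix phiX phiY tm))
  (h2 : maxY (phi_mix phiX phiY tm) <=
        lam * minY (phi_mix phiX phiY tp) + (1 - lam) * minY (phi_mix phiX phiY tm))
  (K : R)
  (hK1 : expX phiX tm + maxY phiY <= K)
  (hK2 : K <= expX phiX tp + minY phiY) :
  exists (p0 : R) (pstar : SY -> R),
    0 <= p0 <= 1 /\ (forall y, 0 <= pstar y <= 1) /\
    autocratic (fun x y => phiX x + phiY y - K) lam (reactive p0 pstar tp tm).
Proof.
set A := expX phiX tp; set B := expX phiX tm; set D := A - B.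
set M := maxY phiY; set m := minY phiY; set c := K - B.
move: hK1 hK2; rewrite -/A -/B -/M -/m => hK1 hK2.
have [yM hyM] := maxY_ex phiY neY.
have hM y : phiY y <= M := maxY_ge phiY y.
have hm y : m <= phiY y := minY_le phiY y.
have Dge0 : 0 <= D.
  have := hm yM; rewrite -hyM -/M => ?; rewrite /D; lra.
have key y : M <= phiY y + lam * D.
  have e1 := maxY_ge (phi_mix phiX phiY tm) yM.
  have e2 := minY_le (phi_mix phiX phiY tp) y.
  have e3 := minY_le (phi_mix phiX phiY tm) y.
  rewrite !phi_mixE // -/A -/B -hyM -/M in e1 e2 e3.
  have f2 := ler_wpM2l hlam0 e2.
  have f3 : (1 - lam) * minY (phi_mix phiX phiY tm) <= (1 - lam) * (B + phiY y).
    by apply: ler_wpM2l => //; lra.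
  rewrite /D; lra.
set b := Num.max M (c - (1 - lam) * D).
have hb1 : M <= b by rewrite le_max lexx.
have hb2 : c - (1 - lam) * D <= b by rewrite le_max lexx orbT.
have hb3 : b <= c.
  rewrite ge_max; apply/andP; split; first by rewrite /c; lra.
  by rewrite lerBlDr lerDl mulr_ge0 // subr_ge0 ltW.
have hb4 y : b <= phiY y + lam * D.
  rewrite ge_max key /=.
  have := hm y; rewrite /c /D -/m; lra.
exists ((c - b) / ((1 - lam) * D)), (fun y => (b - phiY y) / (lam * D)).
have [p01 pz] : 0 <= (c - b) / ((1 - lam) * D) <= 1 /\
   (1 - lam) * D * ((c - b) / ((1 - lam) * D)) = c - b.
  by apply: frac01; apply/andP; split; lra.
have ps y : 0 <= (b - phiY y) / (lam * D) <= 1 /\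
   lam * D * ((b - phiY y) / (lam * D)) = b - phiY y.
  by apply: frac01; apply/andP; split; have := hM y; have := hb4 y; lra.
split=> //; split; first by move=> y; case: (ps y).
move=> sY hsY.
set p0 := (c - b) / ((1 - lam) * D).
set pstar := fun y => (b - phiY y) / (lam * D).
have hps y : 0 <= pstar y <= 1 by case: (ps y).
have CF n := closed_form htp htm hsY n (fun y => (ps y).2) pz.
set C := `|c - b| + (1 - lam) * D.
have bound n : `|disc_partial (reactive p0 pstar tp tm) sY
     (fun x y => phiX x + phiY y - K) lam n| <= C * lam ^+ n.
  rewrite CF -/B -/c -/D normrM ger0_norm ?exprn_ge0 // mulrC ler_wpM2r ?exprn_ge0 //.
  have /andP[q0 q1] := q_01 htp htm p01 hps hsY n.
  set q := qt _ _ _ _ _ n.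
  have h1l : 0 <= 1 - lam by lra.
  apply: (le_trans (ler_normB _ _)); rewrite lerD2l.
  rewrite ger0_norm ?mulr_ge0 //.
  by rewrite ler_piMr // mulr_ge0.
have lamn : (fun n => C * lam ^+ n) @ \oo --> 0.
  rewrite -(mulr0 C); apply: cvgMl_tmp; apply: cvg_expr.
  by rewrite ger0_norm.
apply: (squeeze_cvgr (f := fun n => - (C * lam ^+ n)) (h := fun n => C * lam ^+ n)).
- by apply: nearW => n; rewrite -ler_norml.
- by rewrite -oppr0; apply: cvgN.
- exact: lamn.
Qed.
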